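(* Let $(\lambda_n)_{n\ge0}$ be an increasing sequence of non-negative real numbers tending to infinity and let $(c_n)_{n\ge0}$ be complex numbers satisfying $$\sum_{\lambda_n\le x}\lambda_n|c_n|=O(x)\quad(x\to\infty).$$ Then $\sum_{n=0}^\infty c_n$ is $(\mathrm{L},\{\lambda_n\})$ summable (to $\ell$) if and only if it is $(\gamma,\{\lambda_n\},1)$ summable (to $\ell$).
   Context: Let $\gamma_1(x)=\frac{\sin x}{x}$ ($\gamma_1(0)=1$). The series $\sum c_n$ is $(\gamma,\{\lambda_n\},1)$ summable to $\ell$ if $\sum_{n=0}^\infty c_n\gamma_1(\lambda_nh)$ converges for all sufficiently small $h>0$ and $\lim_{h\to0^+}\sum_{n=0}^\infty c_n\gamma_1(\lambda_nh)=\ell$. It is $(\mathrm{L},\{\lambda_n\})$ summable to $\ell$ if it is $(\gamma,\{\lambda_n\},1)$ summable to $\ell$ and in addition $\sum_{\lambda_n>0}c_n\frac{e^{i\lambda_nh}}{\lambda_nh}$ converges for all sufficiently small $|h|>0$. *)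

(* Defs.v *)
From Stdlib Require Import Reals.
From Coquelicot Require Import Coquelicot.
Open Scope R_scope.

(* sum of a convergent complex series, computed componentwise
   (Coquelicot's [Series] is real-valued) *)
Definition CSeries (a : nat -> C) : C :=
  (Series (fun n => fst (a n)), Series (fun n => snd (a n))).

Definition Cex_series (a : nat -> C) : Prop := @ex_series _ C_R_NormedModule a.

Definition gamma1 (x : R) : R := if Req_EM_T x 0 then 1 else sin x / x.

Definition gamma_term (lam : nat -> R) (c : nat -> C) (h : R) (n : nat) : C :=
  Cmult (c n) (RtoC (gamma1 (lam n * h))).

Definition gamma_summable (lam : nat -> R) (c : nat -> C) (l : C) : Prop :=
  (exists delta : R, 0 < delta /\
     forall h : R, 0 < h < delta -> Cex_series (gamma_term lam c h)) /\
  filterlim (fun h : R => CSeries (gamma_term lam c h)) (at_right 0) (locally l).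

Definition L_term (lam : nat -> R) (c : nat -> C) (h : R) (n : nat) : C :=
  if Rlt_dec 0 (lam n)
  then Cmult (c n) (Cdiv (cos (lam n * h), sin (lam n * h)) (RtoC (lam n * h)))
  else RtoC 0.

Definition L_summable (lam : nat -> R) (c : nat -> C) (l : C) : Prop :=
  gamma_summable lam c l /\
  (exists delta : R, 0 < delta /\
     forall h : R, 0 < Rabs h < delta -> Cex_series (L_term lam c h)).

Definition weighted_count (lam : nat -> R) (c : nat -> C) (x : R) (N : nat) : R :=
  sum_f_R0 (fun n => if Rle_dec (lam n) x then lam n * Cmod (c n) else 0) N.

(* Main.v *)
Require Import Defs.
From Stdlib Require Import Reals Lra Lia Psatz.
From Coquelicot Require Import Coquelicot.
Open Scope R_scope.

Lemma lam_mono (lam : nat -> R) : (forall n, lam n < lam (S n)) ->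
  forall n m, (n <= m)%nat -> lam n <= lam m.
Proof.
  intros H n m Hnm; induction Hnm; [lra|]. specialize (H m); lra.
Qed.

Definition Pw (lam : nat -> R) (c : nat -> C) (N : nat) : R :=
  sum_f_R0 (fun n => lam n * Cmod (c n)) N.

Lemma Pw_nonneg lam c : (forall n, 0 <= lam n) -> forall N, 0 <= Pw lam c N.
Proof.
  intros H N; unfold Pw; apply cond_pos_sum; intro n.
  apply Rmult_le_pos; [apply H| apply Cmod_ge_0].
Qed.

Lemma Pw_last lam c : (forall n, 0 <= lam n) -> forall N, lam N * Cmod (c N) <= Pw lam c N.
Proof.
  intros H N. destruct N; unfold Pw; simpl; [lra|].
  pose proof (Pw_nonneg lam c H N). unfold Pw in H0. lra.
Qed.

Lemma Pw_weighted lam c : (forall n, lam n < lam (S n)) ->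
  forall N, weighted_count lam c (lam N) N = Pw lam c N.
Proof.
  intros H N. unfold weighted_count, Pw. apply sum_eq. intros i Hi.
  destruct (Rle_dec (lam i) (lam N)) as [_|n]; [reflexivity|].
  exfalso; apply n; apply lam_mono; auto.
Qed.

Lemma key_series (lam : nat -> R) (c : nat -> C) :
  (forall n : nat, 0 <= lam n) ->
  (forall n : nat, lam n < lam (S n)) ->
  is_lim_seq lam p_infty ->
  (exists M X : R, forall x : R, X <= x ->
     forall N : nat, weighted_count lam c x N <= M * x) ->
  ex_series (fun n => if Rlt_dec 0 (lam n) then Cmod (c n) / lam n else 0).
Proof.
  intros Hpos Hinc Hlim [M [X HM]].
  set (Y := Rmax X 1).
  assert (HY1 : 1 <= Y) by (unfold Y; apply Rmax_r).
  assert (HYX : X <= Y) by (unfold Y; apply Rmax_l).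
  apply is_lim_seq_spec in Hlim. destruct (Hlim Y) as [n0 Hn0].
  assert (Hu : forall k, Y < lam (n0 + k)%nat) by (intro k; apply Hn0; lia).
  assert (HM0 : 0 <= M).
  { assert (H := HM Y HYX 0%nat). assert (0 <= weighted_count lam c Y 0).
    { unfold weighted_count. simpl. destruct (Rle_dec (lam 0%nat) Y).
      apply Rmult_le_pos; [apply Hpos|apply Cmod_ge_0]. lra. }
    nra. }
  apply (ex_series_incr_n _ n0).
  set (u := fun k => lam (n0 + k)%nat).
  set (b := fun k => Cmod (c (n0 + k)%nat)).
  assert (Hb : forall k, 0 <= b k) by (intro; apply Cmod_ge_0).
  assert (Hupos : forall k, 0 < u k) by (intro k; unfold u; specialize (Hu k); lra).
  assert (Huinc : forall k, u k < u (S k)).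
  { intro k; unfold u. rewrite Nat.add_succ_r. apply Hinc. }
  set (T := fun K => sum_f_R0 (fun k => u k * b k) K).
  assert (HTP : forall K, T K <= Pw lam c (n0 + K)).
  { induction K.
    - change (u 0%nat * b 0%nat <= Pw lam c (n0 + 0)).
      unfold u, b. apply Pw_last; auto.
    - change (T K + u (S K) * b (S K) <= Pw lam c (n0 + S K)).
      rewrite Nat.add_succ_r.
      change (Pw lam c (S (n0 + K))) with (Pw lam c (n0+K) + lam (S (n0+K)) * Cmod (c (S (n0+K)))).
      unfold u, b. rewrite Nat.add_succ_r. lra. }
  assert (HTM : forall K, T K <= M * u K).
  { intro K. eapply Rle_trans; [apply HTP|]. rewrite <- Pw_weighted by auto.
    apply HM. unfold u in *; specialize (Hu K); lra. }
  assert (HT0 : forall K, 0 <= T K).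
  { intro K; unfold T; apply cond_pos_sum; intro; apply Rmult_le_pos; [left; apply Hupos|apply Hb]. }
  assert (Hinv : forall K, sum_f_R0 (fun k => b k / u k) K <=
      T K * (/ u K * / u K) + 2 * M * (/ u 0%nat - / u K)).
  { induction K.
    - unfold T; simpl. assert (Hu0 := Hupos 0%nat).
      replace (u 0%nat * b 0%nat * (/ u 0%nat * / u 0%nat)) with (b 0%nat / u 0%nat) by (field; lra).
      lra.
    - change (sum_f_R0 (fun k => b k / u k) K + b (S K) / u (S K) <=
        (T K + u (S K) * b (S K)) * (/ u (S K) * / u (S K)) + 2 * M * (/ u 0%nat - / u (S K))).
      assert (Hp := Hupos K). assert (Hq := Hupos (S K)). assert (Hi := Huinc K).
      set (p := / u K). set (q := / u (S K)).
      assert (Hp0 : 0 < p) by (apply Rinv_0_lt_compat; lra).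
      assert (Hq0 : 0 < q) by (apply Rinv_0_lt_compat; lra).
      assert (Hqp : q < p) by (apply Rinv_lt_contravar; nra).
      assert (HTp : T K * p <= M).
      { specialize (HTM K). unfold p. apply (Rmult_le_reg_r (u K)); [lra|].
        rewrite Rmult_assoc, Rinv_l by lra. lra. }
      assert (Hbq : b (S K) / u (S K) = u (S K) * b (S K) * (q * q)).
      { unfold q. field. lra. }
      rewrite Hbq.
      assert (HT0K := HT0 K). assert (HbS := Hb (S K)).
      assert (T K * (p * p - q * q) <= 2 * M * (p - q)).
      { assert (T K * (p*p - q*q) = (T K * p) * (p - q) + T K * q * (p - q)) by ring.
        assert (T K * q * (p - q) <= T K * p * (p - q)).
        { apply Rmult_le_compat_r; [lra|]. apply Rmult_le_compat_l; lra. }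
        assert (T K * p * (p - q) <= M * (p - q)) by (apply Rmult_le_compat_r; lra).
        lra. }
      assert ((T K + u (S K) * b (S K)) * (q * q) = T K * (q*q) + u (S K) * b (S K) * (q * q)) by ring.
      assert (T K * (p * p) = T K * (q*q) + T K * (p * p - q * q)) by ring.
      change (/ u K) with p in IHK. lra. }
  assert (Hbound : forall K, sum_n (fun k => b k / u k) K <= 3 * M).
  { intro K. rewrite sum_n_Reals. eapply Rle_trans; [apply Hinv|].
    assert (Hp := Hupos K). assert (Hp0 := Hupos 0%nat).
    assert (HuK : 1 <= u K) by (unfold u; specialize (Hu K); lra).
    assert (Hu0 : 1 <= u 0%nat) by (unfold u; specialize (Hu 0%nat); lra).
    assert (Hi1 : 0 < / u K <= 1).
    { split; [apply Rinv_0_lt_compat; lra|]. rewrite <- Rinv_1. apply Rinv_le_contravar; lra. }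
    assert (Hi2 : 0 < / u 0%nat <= 1).
    { split; [apply Rinv_0_lt_compat; lra|]. rewrite <- Rinv_1. apply Rinv_le_contravar; lra. }
    assert (T K * / u K <= M).
    { specialize (HTM K). apply (Rmult_le_reg_r (u K)); [lra|].
      rewrite Rmult_assoc, Rinv_l by lra. lra. }
    assert (T K * (/ u K * / u K) <= M).
    { rewrite <- Rmult_assoc. assert (0 <= T K * / u K) by (apply Rmult_le_pos; [apply HT0|lra]).
      nra. }
    nra. }
  assert (Hex : ex_series (fun k => b k / u k)).
  { destruct (ex_finite_lim_seq_incr (sum_n (fun k => b k / u k)) (3 * M)) as [l Hl].
    - intro n. rewrite !sum_n_Reals. simpl.
      assert (0 <= b (S n) / u (S n)).
      { apply Rdiv_le_0_compat; [apply Hb|apply Hupos]. }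
      lra.
    - exact Hbound.
    - exists l. exact Hl. }
  eapply ex_series_ext; [|exact Hex].
  intro k. simpl. unfold b, u. destruct (Rlt_dec 0 (lam (n0 + k)%nat)) as [_|n]; [reflexivity|].
  exfalso; apply n. specialize (Hu k). lra.
Qed.

Theorem proposition2p1 (lam : nat -> R) (c : nat -> C) :
  (forall n : nat, 0 <= lam n) ->
  (forall n : nat, lam n < lam (S n)) ->
  is_lim_seq lam p_infty ->
  (exists M X : R, forall x : R, X <= x ->
     forall N : nat, weighted_count lam c x N <= M * x) ->
  forall l : C, L_summable lam c l <-> gamma_summable lam c l.
Proof.
  intros Hpos Hinc Hlim HW l. split; [intros [H _]; exact H|].
  intros Hg. split; [exact Hg|].
  exists 1. split; [lra|]. intros h Hh.
  assert (Hh0 : h <> 0) by (intro E; subst; rewrite Rabs_R0 in Hh; lra).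
  pose proof (key_series lam c Hpos Hinc Hlim HW) as Hk.
  unfold Cex_series.
  apply (ex_series_le (K := R_AbsRing) (V := C_R_CompleteNormedModule) _
    (fun n => scal (/ Rabs h) (if Rlt_dec 0 (lam n) then Cmod (c n) / lam n else 0))).
  2: { apply (ex_series_scal (K := R_AbsRing) (V := R_NormedModule)). exact Hk. }
  intro n. unfold L_term. rewrite <- Cmod_norm.
  unfold scal; simpl; unfold mult; simpl.
  destruct (Rlt_dec 0 (lam n)) as [Hl|Hl].
  - rewrite Cmod_mult, Cmod_div.
    + rewrite Cmod_R, Rabs_mult, (Rabs_right (lam n)) by lra.
      assert (Hcs : Cmod (cos (lam n * h), sin (lam n * h)) = 1).
      { unfold Cmod; simpl. pose proof (sin2_cos2 (lam n * h)). unfold Rsqr in H.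
        replace (cos (lam n * h) * (cos (lam n * h) * 1) + sin (lam n * h) * (sin (lam n * h) * 1)) with 1 by lra.
        apply sqrt_1. }
      rewrite Hcs. assert (0 < Rabs h) by (apply Rabs_pos_lt; auto).
      right. field. split; lra.
    + intro E. apply (f_equal fst) in E. simpl in E.
      apply (Rmult_integral_contrapositive_currified (lam n) h); lra.
  - rewrite Cmod_R, Rabs_R0. lra.
Qed.
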